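(* In the setting of the context, let $(h_1',h_2')\in\mathbb C(s)^2$ be a nonzero pair with $\widetilde\gamma_1h_1'+\widetilde\gamma_2h_2'=0$, $(h_1')^{\iota_1}=\pm h_1'$ and $(h_2')^{\iota_2}=\pm h_2'$. If $(h_1')^{\iota_1}=h_1'$ or $(h_2')^{\iota_2}=h_2'$, then the only pair $(h_1,h_2)\in\mathbb C(s)^2$ with $\widetilde\gamma_1h_1+\widetilde\gamma_2h_2=0$, $h_1^{\iota_1}=-h_1$ and $h_2^{\iota_2}=-h_2$ is $(0,0)$.
   Context: For a genus-zero weighted quadrant walk model (step set one of the five genus-zero sets, step weights $d_{i,j}>0$, Boltzmann weights $a,b>0$), $A=1-1/a$, $B=1-1/b$; $s\mapsto(x(s),y(s))$ is a fixed rational parametrization by $\mathbb P^1$ of the kernel curve (for a fixed real $t$ transcendental over $\mathbb Q((d_{i,j}),a,b)$), with $x(1/s)=x(s)$, $y(q/s)=y(s)$ for a fixed real $q$ not a root of unity. $\iota_1(s)=1/s$, $\iota_2(s)=q/s$, $\sigma=\iota_2\circ\iota_1$, $h^\tau=h\circ\tau$. It is known that the only elements of $\mathbb C(s)$ fixed by both $\iota_1$ and $\iota_2$ (equivalently by $\sigma$) are the constants. $\widetilde\gamma_1=A/x(s)-td_{1,-1}/y(s)$, $\widetilde\gamma_2=B/y(s)-td_{-1,1}/x(s)$. *)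

(* Defs.v *)
From HB Require Import structures.
From mathcomp Require Import all_boot all_order all_algebra.
From mathcomp Require Import complex.
From mathcomp Require Import reals.
Set Implicit Arguments. Unset Strict Implicit. Unset Printing Implicit Defensive.
Import Order.TTheory GRing.Theory Num.Theory.
Local Open Scope ring_scope.

Definition field_closed (F : fieldType) (S : F -> Prop) : Prop :=
  [/\ S 1,
      (forall u v, S u -> S v -> S (u - v)),
      (forall u v, S u -> S v -> S (u * v)) &
      (forall u, S u -> S u^-1)].

Definition in_gen_field (F : fieldType) (G : F -> Prop) (z : F) : Prop :=
  forall S : F -> Prop, field_closed S -> (forall u, G u -> S u) -> S z.

Definition transcendental_over (F : fieldType) (G : F -> Prop) (z : F) : Prop :=
  forall p : {poly F}, p != 0 -> (forall i, in_gen_field G p`_i) -> p.[z] != 0.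

Section RatFun.
Variable R : realType.
Local Notation C := R[i].
Definition ratfun := {fraction {poly C}}.

Definition rcst (c : C) : ratfun := FracField.tofrac (c%:P).
Definition rreal (r : R) : ratfun := rcst (r%:C)%C.
Definition svar : ratfun := FracField.tofrac 'X.

Definition peval (p : {poly C}) (r : ratfun) : ratfun :=
  (map_poly rcst p).[r].
Definition rcomp (f r : ratfun) : ratfun :=
  peval (\n_(repr f)) r / peval (\d_(repr f)) r.

Definition iota1 (h : ratfun) : ratfun := rcomp h (svar^-1).
Definition iota2 (q : R) (h : ratfun) : ratfun := rcomp h (rreal q / svar).

Definition is_const (h : ratfun) : Prop := exists c : C, h = rcst c.
End RatFun.

(* Weights are indexed by 'I_3 x 'I_3 with the convention
   d_{i,j} = d (i+1) (j+1) for i, j in {-1,0,1}; a step is absent iff its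
   weight is 0. *)
Definition dw (R : realType) (d : 'I_3 -> 'I_3 -> R) (i j : nat) : R :=
  d (inord i) (inord j).

(* genus-zero weighted step sets: steps (1,-1) and (-1,1) present, no step
   (0,0), and all the steps of one of the corners {(1,1),(1,0),(0,1)} or
   {(-1,-1),(-1,0),(0,-1)} absent, with at least one step of the opposite
   corner present. *)
Definition genus_zero_weights (R : realType) (d : 'I_3 -> 'I_3 -> R) : Prop :=
  [/\ forall i j, 0 <= d i j,
      0 < dw d 2 0, 0 < dw d 0 2, dw d 1 1 = 0 &
      ([/\ dw d 2 2 = 0, dw d 2 1 = 0, dw d 1 2 = 0 &
           (0 < dw d 0 0 \/ 0 < dw d 0 1 \/ 0 < dw d 1 0)]
       \/
       [/\ dw d 0 0 = 0, dw d 0 1 = 0, dw d 1 0 = 0 &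
           (0 < dw d 2 2 \/ 0 < dw d 2 1 \/ 0 < dw d 1 2)])].

(* K(x,y) = x y (1 - t S(x,y)) = x y - t * sum_{i,j} d_{i,j} x^{i+1} y^{j+1} *)
Definition kernel (R : realType) (d : 'I_3 -> 'I_3 -> R) (t : R)
  (x y : ratfun R) : ratfun R :=
  x * y - rreal t * \sum_(i < 3) \sum_(j < 3) rreal (d i j) * x ^+ i * y ^+ j.

(* (x(s), y(s)) is a rational parametrization by P^1 of the kernel curve:
   it lies on the curve, x and y are nonconstant, and it is birational,
   i.e. C(x(s), y(s)) = C(s). *)
Definition kernel_param (R : realType) (d : 'I_3 -> 'I_3 -> R) (t : R)
  (x y : ratfun R) : Prop :=
  [/\ kernel d t x y = 0, ~ is_const x, ~ is_const y &
      in_gen_field (fun u => is_const u \/ u = x \/ u = y) (svar R)].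

Definition gamma1 (R : realType) (d : 'I_3 -> 'I_3 -> R) (a t : R)
  (x y : ratfun R) : ratfun R :=
  rreal (1 - a^-1) / x - rreal (t * dw d 2 0) / y.
Definition gamma2 (R : realType) (d : 'I_3 -> 'I_3 -> R) (b t : R)
  (x y : ratfun R) : ratfun R :=
  rreal (1 - b^-1) / y - rreal (t * dw d 0 2) / x.

Definition not_root_of_unity (R : realType) (q : R) : Prop :=
  forall n : nat, (0 < n)%N -> q ^+ n != 1.

(* Main.v *)
Require Import Defs.
From HB Require Import structures.
From mathcomp Require Import all_boot all_order all_algebra generic_quotient.
From mathcomp Require Import complex.
From mathcomp Require Import reals.
From mathcomp Require Import ring lra zify.
Set Implicit Arguments. Unset Strict Implicit. Unset Printing Implicit Defensive.
Import Order.TTheory GRing.Theory Num.Theory.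
Local Open Scope ring_scope.
Local Open Scope quotient_scope.

Section S.
Variable R : realType.
Local Notation C := R[i].
Local Notation F := (ratfun R).
Local Notation tf := (@FracField.tofrac {poly C}).

Lemma pi_frac (x : {ratio {poly C}}) :
  (\pi_(F) x) * tf \d_x = tf \n_x.
Proof.
unlock FracField.tofrac.
rewrite -[_ * _]/(FracField.mul _ _).
rewrite -FracField.pi_mul.
apply/eqmodP => /=. rewrite FracField.equivfE /FracField.mulf.
rewrite !numden_Ratio ?oner_eq0 ?mulf_neq0 ?denom_ratioP ?oner_eq0 //.
by rewrite !mulr1 mulrC.
Qed.

Lemma frac_repr (f : F) : f = tf (\n_(repr f)) / tf (\d_(repr f)).
Proof.
have d0 : tf (\d_(repr f)) != 0 by rewrite tofrac_eq0 denom_ratioP.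
by rewrite -pi_frac reprK mulfK.
Qed.

Lemma rcstE : @rcst R = tf \o polyC. Proof. by []. Qed.

Lemma peval_mul (p q : {poly C}) (r : F) : peval (p * q) r = peval p r * peval q r.
Proof. by rewrite /peval rcstE rmorphM /= hornerM. Qed.
Lemma peval_C (c : C) (r : F) : peval c%:P r = rcst c.
Proof. by rewrite /peval rcstE map_polyC hornerC. Qed.
Lemma svar_neq0 : svar R != 0.
Proof. by rewrite /svar tofrac_eq0 polyX_eq0. Qed.

Lemma peval_sum (p : {poly C}) (r : F) :
  peval p r = \sum_(i < size p) rcst p`_i * r ^+ i.
Proof.
rewrite /peval rcstE (horner_coef_wide _ (eq_leq (size_map_poly _ _))).
by apply: eq_bigr => i _; rewrite coef_map.
Qed.

Lemma peval_inj (c : C) (p : {poly C}) : c != 0 ->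
  peval p (rcst c / svar R) = 0 -> p = 0.
Proof.
move=> c0 pe; apply/eqP; apply: contraT => p0.
have := pe; rewrite peval_sum.
have [n sp] : exists n, size p = n.+1.
  by exists (size p).-1; rewrite prednK // size_poly_gt0.
rewrite sp; set N := n.+1.
pose Q := \sum_(i < N) (p`_i * c ^+ i) *: 'X^(N - i) : {poly C}.
have E : svar R ^+ N * \sum_(i < N) rcst p`_i * (rcst c / svar R) ^+ i = tf Q.
  rewrite mulr_sumr /Q rmorph_sum; apply: eq_bigr => i _.
  rewrite -mul_polyC rmorphM rmorphXn /= -/(svar R) rmorphM /= -/(rcst _) -/(rcst _).
  rewrite rmorphXn /= -/(rcst c) expr_div_n.
  have -> : svar R ^+ N = svar R ^+ (N - i) * svar R ^+ i.
    by rewrite -exprD subnK // ltnW.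
  rewrite rmorphM rmorphXn /= -/(rcst _) -/(rcst _).
  have v0 : svar R ^+ i != 0 by rewrite expf_neq0 // svar_neq0.
  move: v0; move: (svar R ^+ i) (svar R ^+ (N - i)) (rcst p`_i) (rcst c ^+ i) => v u a b v0.
  by rewrite mulrAC -!mulrA mulVf // mulr1 mulrC mulrA.
move=> E0; rewrite E0 mulr0 in E.
have Q0 : Q = 0 by apply/eqP; rewrite -tofrac_eq0 -E.
have : Q`_1 = 0 by rewrite Q0 coef0.
rewrite /Q coef_sumMXn (big_pred1 (@ord_max n)).
  move/eqP; rewrite mulf_eq0 expf_eq0 (negbTE c0) andbF orbF => /eqP pn.
  by move: p0; rewrite -lead_coef_eq0 lead_coefE sp /= pn eqxx.
move=> i /=; rewrite /N.
apply/eqP/eqP => [h|-> ] /=; last by lia.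
apply: val_inj => /=; have := ltn_ord i.
by move: (nat_of_ord i) h => k; lia.
Qed.

Definition good (r : F) := forall p, peval p r = 0 -> p = 0.

Lemma rcst_inj (a b : C) : rcst a = rcst b -> a = b.
Proof. by move/eqP; rewrite /rcst tofrac_eq => /eqP/polyC_inj. Qed.

Lemma rcstM (a b : C) : rcst (a * b) = rcst a * rcst b.
Proof. by rewrite /rcst polyCM tofracM. Qed.
Lemma rcst0 : rcst (0 : C) = 0.
Proof. by rewrite /rcst tofrac0. Qed.
Lemma rcst1 : rcst (1 : C) = 1.
Proof. by rewrite /rcst tofrac1. Qed.
Lemma rcstN (a : C) : rcst (- a) = - rcst a.
Proof. by rewrite /rcst polyCN tofracN. Qed.

Lemma peval1 (r : F) : peval 1 r = 1.
Proof. by rewrite -[1 : {poly C}]/(1%:P) peval_C rcst1. Qed.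

Lemma peval_neq0 r p : good r -> p != 0 -> peval p r != 0.
Proof. by move=> g; apply: contra => /eqP /g ->. Qed.

Lemma rcomp_frac (r : F) (n d : {poly C}) : good r -> d != 0 ->
  rcomp (tf n / tf d) r = peval n r / peval d r.
Proof.
move=> g d0; rewrite /rcomp.
set f := tf n / tf d.
have fr := frac_repr f.
move: (denom_ratioP (repr f)) fr.
move: (\n_(repr f)) (\d_(repr f)) => n' d' d'0 fr.
have e : n' * d = n * d'.
  apply/eqP; rewrite -tofrac_eq !tofracM; apply/eqP.
  have t0 : tf d != 0 by rewrite tofrac_eq0.
  have t0' : tf d' != 0 by rewrite tofrac_eq0.
  have H : f * tf d * tf d' = tf n' / tf d' * tf d * tf d' by rewrite -fr.
  move: H; rewrite {1}/f (divfK t0) (mulrAC (tf n' / tf d')) (divfK t0') => ->.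
  done.
apply/eqP; rewrite eqr_div ?peval_neq0 // -!peval_mul e.
done.
Qed.

Lemma rcomp_mul r f g : good r -> rcomp (f * g) r = rcomp f r * rcomp g r.
Proof.
move=> gr.
rewrite [in LHS](frac_repr f) [in LHS](frac_repr g).
rewrite [in RHS](frac_repr f) [in RHS](frac_repr g).
have d1 := denom_ratioP (repr f); have d2 := denom_ratioP (repr g).
rewrite mulf_div -!tofracM !rcomp_frac ?mulf_neq0 // !peval_mul.
by rewrite mulf_div.
Qed.

Lemma rcomp0 r : good r -> rcomp 0 r = 0.
Proof.
move=> gr; have e : (0 : F) = tf 0 / tf 1 by rewrite tofrac0 mul0r.
rewrite {1}e rcomp_frac ?oner_eq0 //.
by rewrite /peval map_poly0 horner0 mul0r.
Qed.

Lemma rcomp_inv r f : good r -> rcomp f^-1 r = (rcomp f r)^-1.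
Proof.
move=> gr; rewrite (frac_repr f).
have d1 := denom_ratioP (repr f).
have [->|n0] := eqVneq (\n_(repr f)) 0.
  by rewrite tofrac0 mul0r invr0 rcomp0 // invr0.
by rewrite invf_div !rcomp_frac // invf_div.
Qed.

Lemma rcomp_cst r c : good r -> rcomp (rcst c) r = rcst c.
Proof.
move=> gr; have -> : rcst c = tf c%:P / tf 1 by rewrite tofrac1 divr1.
by rewrite rcomp_frac ?oner_eq0 // peval_C peval1 divr1.
Qed.

Lemma good1 : good ((svar R)^-1).
Proof. by move=> p; rewrite -div1r -rcst1; apply: peval_inj; rewrite oner_eq0. Qed.

Lemma good2 q : q != 0 -> good (rreal q / svar R).
Proof.
move=> q0 p; apply: peval_inj.
by apply: contra q0 => /eqP [] ->.
Qed.
End S.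

Section Gen.
Variable K : fieldType.
Variable isc : K -> Prop.

Lemma gam_gen (pa pb : K -> K) (p q u v : K) :
  (forall f g : K, pa (f * g) = pa f * pa g) -> (forall f : K, pa f^-1 = (pa f)^-1) ->
  (forall f : K, isc f -> pa f = f) ->
  (forall f : K, pa f = f -> pb f = f -> isc f) ->
  isc p -> isc q -> q != 0 -> u != 0 -> v != 0 -> ~ isc v ->
  pa u = u -> pb v = v -> p / u - q / v != 0.
Proof.
move=> pM pV pc fx ip iq q0 u0 v0 nv pu pv; apply/eqP => E.
have E2 : p * v = q * u.
  apply/eqP; rewrite -subr_eq0.
  have -> : p * v - q * u = (p / u - q / v) * (u * v) by field; apply/andP.
  by rewrite E mul0r.
have [p0|p0] := eqVneq p 0.
  by move: E2; rewrite p0 mul0r => /esym/eqP; rewrite mulf_eq0 (negbTE q0) (negbTE u0).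
have ev : v = q / p * u by rewrite mulrAC -E2 mulrC mulKf.
apply: nv; apply: fx => //.
by rewrite ev !pM pV pc // pc // pu.
Qed.

Lemma core (p1 p2 : K -> K) (g1 g2 h1' h2' h1 h2 : K) :
  (forall f g : K, p1 (f * g) = p1 f * p1 g) -> (forall f : K, p1 f^-1 = (p1 f)^-1) ->
  (forall f g : K, p2 (f * g) = p2 f * p2 g) -> (forall f : K, p2 f^-1 = (p2 f)^-1) ->
  (forall f : K, isc f -> p1 f = f /\ p2 f = f) ->
  (forall f : K, p1 f = f -> p2 f = f -> isc f) ->
  (forall f : K, isc (f * f) -> isc f) ->
  (forall f : K, f = - f -> f = 0) ->
  g1 != 0 -> g2 != 0 ->
  ~ (h1' = 0 /\ h2' = 0) ->
  g1 * h1' + g2 * h2' = 0 ->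
  (p1 h1' = h1' \/ p1 h1' = - h1') ->
  (p2 h2' = h2' \/ p2 h2' = - h2') ->
  (p1 h1' = h1' \/ p2 h2' = h2') ->
  g1 * h1 + g2 * h2 = 0 ->
  p1 h1 = - h1 -> p2 h2 = - h2 ->
  h1 = 0 /\ h2 = 0.
Proof.
move=> p1M p1V p2M p2V pc fx sq two g10 g20 nz e' s1 s2 cs e i1 i2.
have h1'0 : h1' != 0.
  apply/eqP => h0; apply: nz; split => //; move: e'.
  by rewrite h0 mulr0 add0r => /eqP; rewrite mulf_eq0 (negbTE g20) => /eqP.
have h2'0 : h2' != 0.
  apply/eqP => h0; apply: nz; split => //; move: e'.
  by rewrite h0 mulr0 addr0 => /eqP; rewrite mulf_eq0 (negbTE g10) => /eqP.
have eg2 : g2 * h2 = - (g1 * h1) by apply/eqP; rewrite -addr_eq0 addrC e.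
have eg2' : g2 * h2' = - (g1 * h1') by apply/eqP; rewrite -addr_eq0 addrC e'.
have E : h2 * h1' = h1 * h2'.
  apply: (mulfI g20); rewrite mulrA eg2 mulrCA eg2'; ring.
pose f := h1 / h1'.
have fh1 : h1 = f * h1' by rewrite /f divfK.
have fh2 : h2 = f * h2' by rewrite /f mulrAC -E mulfK.
have ff1 : p1 f = f \/ p1 f = - f.
  rewrite /f p1M p1V i1; case: s1 => ->; [right|left]; rewrite ?invrN; ring.
have ff2 : p2 f = f \/ p2 f = - f.
  have -> : f = h2 / h2' by rewrite fh2 mulfK.
  rewrite p2M p2V i2; case: s2 => ->; [right|left]; rewrite ?invrN; field; exact: h2'0.
have sqf : forall z, z = f \/ z = - f -> z * z = f * f.
  by move=> z [] ->; ring.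
have cf : isc f.
  by apply: sq; apply: fx; [rewrite p1M; apply: sqf | rewrite p2M; apply: sqf].
have [c1 c2] := pc f cf.
have f0 : f = 0.
  apply: two; case: cs => [h|h].
    by move: i1; rewrite fh1 p1M h c1 -mulNr; exact: mulIf.
  by move: i2; rewrite fh2 p2M h c2 -mulNr; exact: mulIf.
by rewrite fh1 fh2 f0 !mul0r.
Qed.
Lemma diff_sq (a b : K) : (a - b) * (a + b) = a * a - b * b.
Proof. ring. Qed.
Lemma two_gen (f : K) : (2%:R : K) != 0 -> f = - f -> f = 0.
Proof.
move=> t0 e; have : f * 2%:R == 0 by rewrite mulr_natr mulr2n {1}e addNr.
by rewrite mulf_eq0 (negbTE t0) orbF => /eqP.
Qed.
End Gen.

Section M.
Variable R : realType.
Local Notation C := R[i].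
Local Notation F := (ratfun R).

Lemma in_gen01 (K : fieldType) (G : K -> Prop) (b : bool) : in_gen_field G (b%:R).
Proof.
move=> S [S1 SB SM SV] _; case: b => /=; first exact: S1.
by have := SB 1 1 S1 S1; rewrite subrr.
Qed.

Lemma t_neq0 (G : R -> Prop) (t : R) : transcendental_over G t -> t != 0.
Proof.
move=> tr; have := tr 'X (negbT (polyX_eq0 _)); rewrite hornerX; apply => i.
by rewrite coefX; exact: in_gen01.
Qed.

Lemma rreal_eq0 (r : R) : rreal r = 0 -> r = 0.
Proof. by rewrite /rreal -(rcst0 R) => /rcst_inj; case. Qed.

Lemma sqF (f : F) : is_const (f * f) -> is_const f.
Proof.
move=> [c e]; set r := sqrtC c.
have : (f - rcst r) * (f + rcst r) = 0.
  by rewrite diff_sq -rcstM /r -[sqrtC c * _]expr2 sqrtCK e subrr.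
move/eqP; rewrite mulf_eq0 => /orP [] /eqP h.
  by exists r; apply/eqP; rewrite -subr_eq0 h.
by exists (- r); rewrite rcstN; apply/eqP; rewrite -addr_eq0 h.
Qed.

Lemma twoF (f : F) : f = - f -> f = 0.
Proof.
apply: two_gen; apply/eqP => h.
have : rcst (2%:R : C) = 0.
  by rewrite rcstE /= polyC_natr rmorph_nat h.
by rewrite -(rcst0 R) => /rcst_inj/eqP; rewrite pnatr_eq0.
Qed.
End M.

Theorem lemma3p3 (R : realType) (d : 'I_3 -> 'I_3 -> R) (a b t q : R)
    (x y h1' h2' : ratfun R) :
  genus_zero_weights d ->
  0 < a -> 0 < b ->
  transcendental_over
    (fun u : R => (exists i j, u = d i j) \/ u = a \/ u = b) t ->
  q != 0 -> not_root_of_unity q ->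
  kernel_param d t x y ->
  iota1 x = x -> iota2 q y = y ->
  (forall f : ratfun R, iota1 f = f -> iota2 q f = f -> is_const f) ->
  (h1', h2') != (0, 0) ->
  gamma1 d a t x y * h1' + gamma2 d b t x y * h2' = 0 ->
  (iota1 h1' = h1' \/ iota1 h1' = - h1') ->
  (iota2 q h2' = h2' \/ iota2 q h2' = - h2') ->
  (iota1 h1' = h1' \/ iota2 q h2' = h2') ->
  forall h1 h2 : ratfun R,
    gamma1 d a t x y * h1 + gamma2 d b t x y * h2 = 0 ->
    iota1 h1 = - h1 -> iota2 q h2 = - h2 ->
    h1 = 0 /\ h2 = 0.
Proof.
move=> [dpos d20 d02 _ _] a0 b0 tr q0 qn [kx ncx ncy _] ix iy fx nz e' s1 s2 cs
  h1 h2 e i1 i2.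
have t0 := t_neq0 tr.
have x0 : x != 0 by apply/eqP => x0; apply: ncx; exists 0; rewrite x0 rcst0.
have y0 : y != 0 by apply/eqP => y0; apply: ncy; exists 0; rewrite y0 rcst0.
have p1M : forall f g : ratfun R, iota1 (f * g) = iota1 f * iota1 g.
  by move=> f g; exact: (@rcomp_mul R _ f g (@good1 R)).
have p1V : forall f : ratfun R, iota1 f^-1 = (iota1 f)^-1.
  by move=> f; exact: (@rcomp_inv R _ f (@good1 R)).
have p2M : forall f g : ratfun R, iota2 q (f * g) = iota2 q f * iota2 q g.
  by move=> f g; exact: (@rcomp_mul R _ f g (good2 q0)).
have p2V : forall f : ratfun R, iota2 q f^-1 = (iota2 q f)^-1.
  by move=> f; exact: (@rcomp_inv R _ f (good2 q0)).
have pc : forall f : ratfun R, is_const f -> iota1 f = f /\ iota2 q f = f.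
  move=> f [c ->]; split; [exact: (@rcomp_cst R _ c (@good1 R)) | exact: (@rcomp_cst R _ c (good2 q0))].
have ir : forall r : R, is_const (rreal r) by move=> r; exists (r%:C)%C.
have rr0 : forall r : R, r != 0 -> rreal r != 0.
  by move=> r; apply: contra => /eqP /rreal_eq0 ->.
have g10 : gamma1 d a t x y != 0.
  rewrite /gamma1.
  have pc1 : forall f : ratfun R, is_const f -> iota1 f = f by move=> f /pc [].
  have qn0 : rreal (t * dw d 2 0) != 0 by apply: rr0; rewrite mulf_neq0 // lt0r_neq0.
  exact: (@gam_gen _ (@is_const R) (@iota1 R) (iota2 q) _ _ x y p1M p1V pc1 fx
     (ir _) (ir _) qn0 x0 y0 ncy ix iy).
have g20 : gamma2 d b t x y != 0.
  rewrite /gamma2.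
  have pc2 : forall f : ratfun R, is_const f -> iota2 q f = f by move=> f /pc [].
  have fx' : forall f : ratfun R, iota2 q f = f -> iota1 f = f -> is_const f.
    by move=> f h h'; apply: fx.
  have qn0 : rreal (t * dw d 0 2) != 0 by apply: rr0; rewrite mulf_neq0 // lt0r_neq0.
  exact: (@gam_gen _ (@is_const R) (iota2 q) (@iota1 R) _ _ y x p2M p2V pc2 fx'
     (ir _) (ir _) qn0 y0 x0 ncx iy ix).
have nz' : ~ (h1' = 0 /\ h2' = 0) by move=> [e1 e2]; move: nz; rewrite e1 e2 eqxx.
exact: (core p1M p1V p2M p2V pc fx (@sqF R) (@twoF R) g10 g20 nz' e' s1 s2 cs e i1 i2).
Qed.
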